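(* There exist finite languages $L_1, L_2, L_3, L_4$ (over finite alphabets) such that $\mathbb{ROGI}^*(L_1, L_2)$ and $\mathbb{LOGI}^*(L_3, L_4)$ are not regular. (For instance, over $\{\$, a, b, c, d\}$ with $L_1 = \{acdb, cabd\}$, $L_2 = \{a\$b\}$: $\mathbb{ROGI}^*(L_1,L_2) = \{(ca)^i \$ (bd)^i \mid i \geq 0\} \cup \{a (ca)^i \$ (bd)^i b \mid i \geq 0\}$.)
   Context: Outfix-guided insertion: $x \leftarrow y = \{ x_1 u z v x_2 \mid x = x_1 u v x_2,\ y = u z v,\ u \neq \varepsilon,\ v \neq \varepsilon \}$, extended to languages by union over all pairs. Right one-sided iteration: $\mathbb{ROGI}^{(0)}(L_1,L_2) = L_2$, $\mathbb{ROGI}^{(i+1)}(L_1,L_2) = L_1 \leftarrow \mathbb{ROGI}^{(i)}(L_1,L_2)$, $\mathbb{ROGI}^*(L_1,L_2) = \bigcup_{i\geq 0}\mathbb{ROGI}^{(i)}(L_1,L_2)$. Left one-sided iteration: $\mathbb{LOGI}^{(0)}(L_1,L_2) = L_1$, $\mathbb{LOGI}^{(i+1)}(L_1,L_2) = \mathbb{LOGI}^{(i)}(L_1,L_2) \leftarrow L_2$, $\mathbb{LOGI}^*(L_1,L_2) = \bigcup_{i\geq 0}\mathbb{LOGI}^{(i)}(L_1,L_2)$. *)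

(* Defs.v *)
From mathcomp Require Import all_boot.
Set Implicit Arguments. Unset Strict Implicit. Unset Printing Implicit Defensive.

Definition lang (T : finType) := seq T -> Prop.

Definition finlang (T : finType) (s : seq (seq T)) : lang T := fun w => w \in s.

Definition og_ins (T : finType) (x y w : seq T) : Prop :=
  exists x1 u z v x2 : seq T,
    [/\ x = x1 ++ u ++ v ++ x2, y = u ++ z ++ v, u <> [::], v <> [::]
      & w = x1 ++ u ++ z ++ v ++ x2].

Definition og_ins_lang (T : finType) (L1 L2 : lang T) : lang T :=
  fun w => exists x y, [/\ L1 x, L2 y & og_ins x y w].

Fixpoint ROGI_n (T : finType) (L1 L2 : lang T) (i : nat) : lang T :=
  match i with
  | 0 => L2
  | i'.+1 => og_ins_lang L1 (ROGI_n L1 L2 i')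
  end.

Definition ROGI_star (T : finType) (L1 L2 : lang T) : lang T :=
  fun w => exists i, ROGI_n L1 L2 i w.

Fixpoint LOGI_n (T : finType) (L1 L2 : lang T) (i : nat) : lang T :=
  match i with
  | 0 => L1
  | i'.+1 => og_ins_lang (LOGI_n L1 L2 i') L2
  end.

Definition LOGI_star (T : finType) (L1 L2 : lang T) : lang T :=
  fun w => exists i, LOGI_n L1 L2 i w.

Definition regular (T : finType) (L : lang T) : Prop :=
  exists (Q : finType) (q0 : Q) (delta : Q -> T -> Q) (F : pred Q),
    forall w, L w <-> F (foldl delta q0 w).

(* Main.v *)
Require Import Defs.
From mathcomp Require Import all_boot.
From mathcomp Require Import zify.

Set Implicit Arguments. Unset Strict Implicit. Unset Printing Implicit Defensive.

Definition T := 'I_4.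
Definition la : T := @Ordinal 4 0 isT.
Definition lb : T := @Ordinal 4 1 isT.
Definition lc : T := @Ordinal 4 2 isT.
Definition ld : T := @Ordinal 4 3 isT.

Definition splits (s : seq T) := [seq (take k s, drop k s) | k <- iota 0 (size s).+1].

Lemma splitsP s p q : p ++ q = s -> (p, q) \in splits s.
Proof.
move=> <-; apply/mapP; exists (size p); last by rewrite take_size_cat // drop_size_cat.
by rewrite mem_iota size_cat /=; lia.
Qed.

Lemma pigeon (Q : finType) (f : nat -> Q) : exists i j, i < j /\ f i = f j.
Proof.
pose g (i : 'I_(#|Q|.+1)) := f i.
have : ~~ injectiveb g.
  by apply/negP => /injectiveP/leq_card; rewrite card_ord ltnn.
case/injectivePn => i [j neq eqf].
case: (ltngtP i j) => [lt|lt|eq].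
- by exists i, j.
- by exists j, i.
- by move: neq; rewrite -val_eqE /= eq eqxx.
Qed.

Lemma nonreg (L : lang T) (p s : nat -> seq T) :
  (forall i, L (p i ++ s i)) -> (forall i j, i < j -> ~ L (p j ++ s i)) -> ~ regular L.
Proof.
move=> Hin Hout [Q [q0 [delta [F HF]]]].
have [i [j [lt eq]]] := pigeon (fun n => foldl delta q0 (p n)).
apply: (Hout i j lt); apply/HF; rewrite foldl_cat -eq -foldl_cat; apply/HF; exact: Hin.
Qed.

Lemma head_ne (d : T) s1 s2 : s1 != [::] -> head d (s1 ++ s2) = head d s1.
Proof. by case: s1. Qed.

Lemma last_ne (d : T) s1 s2 : s2 != [::] -> last d (s1 ++ s2) = last d s2.
Proof. by rewrite last_cat; case: s2. Qed.

Lemma cnt5 (c : T) (x1 u z v x2 : seq T) :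
  count_mem c (x1 ++ u ++ z ++ v ++ x2) = count_mem c (x1 ++ x2) + count_mem c (u ++ z ++ v).
Proof. rewrite !count_cat; lia. Qed.

Lemma cnt5' (c : T) (x1 u v x2 : seq T) :
  count_mem c (x1 ++ u ++ v ++ x2) = count_mem c x1 + count_mem c (u ++ v) + count_mem c x2.
Proof. rewrite !count_cat; lia. Qed.

Lemma cnt_ins (p q : T) (x1 u z v x2 : seq T) :
  count_mem p (x1 ++ u ++ v ++ x2) = count_mem q (x1 ++ u ++ v ++ x2) ->
  count_mem p z = count_mem q z ->
  count_mem p (x1 ++ u ++ z ++ v ++ x2) = count_mem q (x1 ++ u ++ z ++ v ++ x2).
Proof. rewrite !count_cat; lia. Qed.

Definition L1 : seq (seq T) := [:: [:: la; lc; ld; lb]; [:: lc; la; lb; ld]].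
Definition L2 : seq (seq T) := [:: [:: lc; ld]].

Definition goodR (h l : T) := ((h == lc) && (l == ld)) || ((h == la) && (l == lb)).
Definition InvR (w : seq T) :=
  (count_mem lc w == count_mem ld w) && goodR (head la w) (last la w).

Definition checkR (x1 u v x2 : seq T) :=
  (u != [::]) ==> (v != [::]) ==> goodR (head la u) (last la v) ==>
  ((count_mem lc (x1 ++ x2) == count_mem ld (x1 ++ x2)) &&
   goodR (head (head la u) x1) (last (last la v) x2)).

Lemma checkR_all : all (fun x => all (fun p1 => all (fun p2 =>
   all (fun p3 => checkR p1.1 p2.1 p3.1 p3.2) (splits p2.2)) (splits p1.2)) (splits x)) L1.
Proof. by vm_compute. Qed.

Lemma invR_step x y w : x \in L1 -> InvR y -> og_ins x y w -> InvR w.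
Proof.
move=> xL Iy [x1 [u [z [v [x2 [ex ey nu nv ew]]]]]].
have nu' : u != [::] by apply/eqP.
have nv' : v != [::] by apply/eqP.
have := checkR_all; move/allP/(_ _ xL)/allP.
have h1 : (x1, u ++ v ++ x2) \in splits x by apply: splitsP; rewrite ex.
move/(_ _ h1)/allP.
have h2 : (u, v ++ x2) \in splits (u ++ v ++ x2) by apply: splitsP.
move/(_ _ h2)/allP.
have h3 : (v, x2) \in splits (v ++ x2) by apply: splitsP.
move/(_ _ h3); rewrite /checkR /= nu' nv' /=.
move: Iy; rewrite /InvR ey head_ne // !catA last_ne // => /andP [Cy Gy].
rewrite Gy /= => /andP [C G].
move: Cy; rewrite -catA => Cy.
rewrite /InvR ew cnt5 cnt5 (eqP C) (eqP Cy) eqxx /=.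
rewrite !catA last_cat (@last_ne la ((x1 ++ u) ++ z) v nv').
have -> : head la ((((x1 ++ u) ++ z) ++ v) ++ x2) = head (head la u) x1.
  by rewrite -!catA; case E: x1 => [|h t] //=; rewrite head_ne.
exact: G.
Qed.

Lemma invR_all n w : ROGI_n (finlang L1) (finlang L2) n w -> InvR w.
Proof.
elim: n w => [|n IH] w /=.
  by rewrite /finlang inE => /eqP ->.
case=> x [y [xL yL hw]]; exact: invR_step xL (IH _ yL) hw.
Qed.

Fixpoint pR (n : nat) : seq T := if n is m.+1 then lc :: la :: pR m else [::].
Fixpoint sR (n : nat) : seq T := if n is m.+1 then sR m ++ [:: lb; ld] else [:: lc; ld].

Lemma R_shape n : exists z, pR n ++ sR n = [:: lc] ++ z ++ [:: ld].
Proof.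
case: n => [|n]; first by exists [::].
exists (la :: (pR n ++ sR n) ++ [:: lb]).
by rewrite /= -!catA.
Qed.

Lemma R_in n : ROGI_n (finlang L1) (finlang L2) (n.*2) (pR n ++ sR n).
Proof.
elim: n => [|n IH]; first by rewrite /= /finlang inE.
have [z ez] := R_shape n.
rewrite doubleS /=.
exists [:: lc; la; lb; ld], ([:: la] ++ (pR n ++ sR n) ++ [:: lb]); split.
- by [].
- exists [:: la; lc; ld; lb], (pR n ++ sR n); split => //.
  exists [:: la], [:: lc], z, [:: ld], [:: lb]; split => //.
  by rewrite ez /= -!catA.
- exists [:: lc], [:: la], (pR n ++ sR n), [:: lb], [:: ld]; split => //.
  by rewrite /= -!catA.
Qed.

Lemma cnt_pR n : count_mem lc (pR n) = n /\ count_mem ld (pR n) = 0.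
Proof. by elim: n => //= n [-> ->]. Qed.

Lemma cnt_sR n : count_mem lc (sR n) = 1 /\ count_mem ld (sR n) = n.+1.
Proof. by elim: n => //= n [h1 h2]; rewrite !count_cat h1 h2 /=; lia. Qed.

Lemma rogi_nonreg : ~ regular (ROGI_star (finlang L1) (finlang L2)).
Proof.
apply: (nonreg (p := pR) (s := sR)).
  by move=> i; exists i.*2; apply: R_in.
move=> i j lt [k /invR_all].
rewrite /InvR !count_cat; have [-> ->] := cnt_pR j; have [-> ->] := cnt_sR i.
move=> /andP [/eqP h _]; lia.
Qed.

Definition eL (p q : T) := ~~ ((p == la) && (q == ld)) && ~~ ((p == lc) && (q == lb)).

Definition L3 : seq (seq T) := [:: [:: la; lb]].
Definition L4 : seq (seq T) := [:: [:: lc; la; lb; ld]; [:: la; lc; ld; lb]].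

Definition InvL (w : seq T) := [&& sorted eL w,
  count_mem la w == count_mem lb w & count_mem lc w == count_mem ld w].

Definition checkL (u z v : seq T) :=
  (u != [::]) ==> (v != [::]) ==> sorted eL (u ++ v) ==>
  [&& sorted eL (u ++ z ++ v), count_mem la z == count_mem lb z
    & count_mem lc z == count_mem ld z].

Lemma checkL_all : all (fun y => all (fun p1 =>
   all (fun p2 => checkL p1.1 p2.1 p2.2) (splits p1.2)) (splits y)) L4.
Proof. by vm_compute. Qed.

Definition bnd (s1 s2 : seq T) :=
  (s1 == [::]) || (s2 == [::]) || eL (last la s1) (head la s2).

Lemma sorted_cat2 s1 s2 : sorted eL (s1 ++ s2) = [&& sorted eL s1, sorted eL s2 & bnd s1 s2].
Proof.
case: s1 => [|h t] /=; first by rewrite /bnd /= andbT.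
rewrite cat_path /bnd /=.
case: s2 => [|h2 t2] /=; first by rewrite !andbT.
by case: (path eL h t) => //=; rewrite andbC.
Qed.

Lemma bnd_l a m b : m != [::] -> bnd a (m ++ b) = bnd a m.
Proof. by move=> nm; rewrite /bnd head_ne //; case: m nm. Qed.

Lemma sorted_replace a b m m' :
  m != [::] -> m' != [::] -> head la m = head la m' -> last la m = last la m' ->
  sorted eL m' -> sorted eL (a ++ m ++ b) -> sorted eL (a ++ m' ++ b).
Proof.
move=> nm nm' hh hl sm'.
rewrite !sorted_cat2 !bnd_l // => /and3P [-> /and3P [_ -> bm] ba].
rewrite sm' /=; apply/andP; split.
  by move: bm; rewrite /bnd hl (negbTE nm) (negbTE nm').
by move: ba; rewrite /bnd hh (negbTE nm) (negbTE nm') /= orbF.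
Qed.

Lemma sorted_mid a b m : sorted eL (a ++ m ++ b) -> sorted eL m.
Proof. by rewrite !sorted_cat2 => /and3P [_ /and3P [-> _ _] _]. Qed.

Lemma invL_step x y w : y \in L4 -> InvL x -> og_ins x y w -> InvL w.
Proof.
move=> yL Ix [x1 [u [z [v [x2 [ex ey nu nv ew]]]]]].
have nu' : u != [::] by apply/eqP.
have nv' : v != [::] by apply/eqP.
have := checkL_all; move/allP/(_ _ yL)/allP.
have h1 : (u, z ++ v) \in splits y by apply: splitsP; rewrite ey.
move/(_ _ h1)/allP.
have h2 : (z, v) \in splits (z ++ v) by apply: splitsP.
move/(_ _ h2); rewrite /checkL /= nu' nv' /=.
move: Ix; rewrite /InvL ex => /and3P [S A C].
have Suv : sorted eL (u ++ v) by apply: (sorted_mid (a := x1) (b := x2)); rewrite -catA.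
rewrite Suv /= => /and3P [S' A' C'].
rewrite ew; apply/and3P; split.
- have -> : x1 ++ u ++ z ++ v ++ x2 = x1 ++ (u ++ z ++ v) ++ x2 by rewrite -!catA.
  apply: (sorted_replace (m := u ++ v)) => //.
  + by case E: u nu'.
  + by case E: u nu'.
  + by rewrite !head_ne.
  + by rewrite catA !last_ne.
  + by rewrite -catA.
- by apply/eqP; apply: cnt_ins; apply/eqP.
- by apply/eqP; apply: cnt_ins; apply/eqP.
Qed.

Lemma invL_all n w : LOGI_n (finlang L3) (finlang L4) n w -> InvL w.
Proof.
elim: n w => [|n IH] w /=.
  by rewrite /finlang inE => /eqP ->.
case=> x [y [xL yL hw]]; exact: invL_step yL (IH _ xL) hw.
Qed.

Fixpoint pL (n : nat) : seq T := if n is m.+1 then pL m ++ [:: la; lc] else [::].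
Fixpoint qL (n : nat) : seq T := if n is m.+1 then [:: ld; lb] ++ qL m else [::].
Definition sL n := [:: la; lb] ++ qL n.

Lemma L_in n : LOGI_n (finlang L3) (finlang L4) (n.*2) (pL n ++ sL n).
Proof.
elim: n => [|n IH]; first by rewrite /= /finlang inE.
rewrite doubleS /=.
exists (pL n ++ [:: la; lc; ld; lb] ++ qL n), [:: lc; la; lb; ld]; split.
- exists (pL n ++ sL n), [:: la; lc; ld; lb]; split => //.
  + exists (pL n), [:: la], [:: lc; ld], [:: lb], (qL n); split => //.
- by [].
- exists (pL n ++ [:: la]), [:: lc], [:: la; lb], [:: ld], ([:: lb] ++ qL n); split => //.
  + by rewrite -!catA.
  + by rewrite /sL -!catA.
Qed.

Lemma cnt_pL n : count_mem lc (pL n) = n /\ count_mem ld (pL n) = 0.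
Proof. by elim: n => //= n [h1 h2]; rewrite !count_cat h1 h2 /=; lia. Qed.

Lemma cnt_sL n : count_mem lc (sL n) = 0 /\ count_mem ld (sL n) = n.
Proof. by elim: n => //= n [h1 h2]; move: h1 h2; rewrite /sL /= => -> ->. Qed.

Lemma logi_nonreg : ~ regular (LOGI_star (finlang L3) (finlang L4)).
Proof.
apply: (nonreg (p := pL) (s := sL)).
  by move=> i; exists i.*2; apply: L_in.
move=> i j lt [k /invL_all].
rewrite /InvL => /and3P [_ _ /eqP].
rewrite !(count_cat _ (pL j) (sL i)).
have [-> ->] := cnt_pL j; have [-> ->] := cnt_sL i; lia.
Qed.

Theorem proposition4p12 :
  (exists (T : finType) (L1 L2 : seq (seq T)),
      ~ regular (ROGI_star (finlang L1) (finlang L2))) /\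
  (exists (T : finType) (L3 L4 : seq (seq T)),
      ~ regular (LOGI_star (finlang L3) (finlang L4))).
Proof.
split.
- exists T, L1, L2; exact: rogi_nonreg.
- exists T, L3, L4; exact: logi_nonreg.
Qed.
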